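(* Let $\mathfrak n$ be a non-singular 2-step nilpotent real Lie algebra with center $\mathfrak z$ such that $\dim\mathfrak n>3\dim\mathfrak z$. Then every closed 2-form $\omega$ on $\mathfrak n$ satisfies $\omega(Z,U)=0$ for all $Z\in\mathfrak z$ and $U\in\mathfrak n$.
   Context: A real Lie algebra $\mathfrak n$ is 2-step nilpotent if $[[U,V],W]=0$ for all $U,V,W$ and $\mathfrak n$ is not abelian. It is non-singular if for every $X\in\mathfrak n\setminus\mathfrak z$ the map $\mathrm{ad}(X):\mathfrak n\to\mathfrak z$, $Y\mapsto[X,Y]$, is onto $\mathfrak z$. A 2-form on $\mathfrak n$ is an alternating bilinear form $\omega$ on $\mathfrak n$; it is closed iff $\omega([U,V],W)+\omega([V,W],U)+\omega([W,U],V)=0$ for all $U,V,W\in\mathfrak n$. *)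

(* Defs.v *)
From mathcomp Require Import all_boot all_order all_algebra.
From mathcomp Require Import reals.
Set Implicit Arguments. Unset Strict Implicit. Unset Printing Implicit Defensive.
Import GRing.Theory.
Local Open Scope ring_scope.

Section LieDefs.
Variables (R : realType) (V : vectType R).

Definition bilinear_map (W : lmodType R) (f : V -> V -> W) : Prop :=
  (forall a x y z, f (a *: x + y) z = a *: f x z + f y z) /\
  (forall a x y z, f z (a *: x + y) = a *: f z x + f z y).

Definition alternating_map (W : lmodType R) (f : V -> V -> W) : Prop :=
  forall x, f x x = 0.

Definition is_lie_bracket (br : V -> V -> V) : Prop :=
  [/\ bilinear_map br, alternating_map br &
      forall x y z, br x (br y z) + br y (br z x) + br z (br x y) = 0].

Definition two_step_nilpotent (br : V -> V -> V) : Prop :=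
  is_lie_bracket br /\ (forall u v w, br (br u v) w = 0) /\
  (exists u v, br u v <> 0).

Definition is_center (br : V -> V -> V) (Z : {vspace V}) : Prop :=
  forall x, x \in Z <-> (forall y, br x y = 0).

Definition non_singular (br : V -> V -> V) (Z : {vspace V}) : Prop :=
  forall x, x \notin Z -> forall z, z \in Z -> exists y, br x y = z.

Definition two_form (w : V -> V -> R^o) : Prop :=
  bilinear_map w /\ alternating_map w.

Definition closed_form (br : V -> V -> V) (w : V -> V -> R^o) : Prop :=
  forall u v x, w (br u v) x + w (br v x) u + w (br x u) v = 0.

End LieDefs.

(* Main.v *)
Require Import Defs.
From HB Require Import structures.
From mathcomp Require Import all_boot all_order all_algebra zify.
From mathcomp Require Import reals.
Set Implicit Arguments. Unset Strict Implicit. Unset Printing Implicit Defensive.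
Import GRing.Theory.
Local Open Scope ring_scope.

Lemma lin1P (F : fieldType) m n (f : 'rV[F]_m -> 'rV[F]_n) :
  (forall a u v, f (a *: u + v) = a *: f u + f v) -> forall u, u *m lin1_mx f = f u.
Proof.
move=> Hf u.
pose fL : {linear 'rV[F]_m -> 'rV[F]_n} := HB.pack f (GRing.isLinear.Build _ _ _ _ f Hf).
exact: (mul_rV_lin1 fL u).
Qed.

Lemma core (F : fieldType) n (B S Rad : 'M[F]_n) :
  (forall x : 'rV_n, x *m B = 0 -> (x <= Rad)%MS) -> S *m B *m S^T = 0 ->
  (2 * \rank S <= n + \rank Rad)%N.
Proof.
move=> HR HS.
have h1 := mxrank_mul_ker S B.
have h2 : (\rank (S :&: kermx B) <= \rank Rad)%N.
  apply: mxrankS; apply: submx_trans (capmxSr _ _) _.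
  apply/row_subP => i; apply: HR; by rewrite -row_mul mulmx_ker row0.
have h3 : (S <= kermx (S *m B)^T)%MS.
  rewrite sub_kermx; apply/eqP.
  have := congr1 trmx HS; by rewrite trmx_mul trmxK trmx0.
have h4 := mxrankS h3.
rewrite mxrank_ker mxrank_tr in h4.
have h5 := rank_leq_col (S *m B).
lia.
Qed.

Section T.
Variables (K : fieldType) (V : vectType K).
Import VectorInternalTheory.
Local Notation n := (dim V).

Lemma mem_r2v (rv : 'rV[K]_n) (U : {vspace V}) : (r2v rv \in U) = (rv <= vs2mx U)%MS.
Proof. by rewrite memvE /subsetv genmxE r2vK. Qed.

Lemma transport (b : V -> V -> K) :
 (forall a x y z, b (a *: x + y) z = a * b x z + b y z) ->
 (forall a x y z, b z (a *: x + y) = a * b z x + b z y) ->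
 forall (Rad : {vspace V}) (S : 'M[K]_n),
 (forall x, (forall y, b x y = 0) -> x \in Rad) ->
 (forall i j, b (r2v (row i S)) (r2v (row j S)) = 0) -> (2 * \rank S <= n + \dim Rad)%N.
Proof.
move=> H1 H2 Rad S HR HS.
pose fB (x : 'rV[K]_n) : 'rV[K]_n := \row_j b (r2v x) (r2v (delta_mx 0 j)).
pose B := lin1_mx fB.
have hB x : x *m B = fB x.
  apply: lin1P => a u v; apply/rowP => j; by rewrite !mxE linearP /= H1.
pose gx (x : 'rV[K]_n) (y : 'rV[K]_n) : 'rV[K]_1 := \row_(j < 1) b (r2v x) (r2v y).
have key x y : b (r2v x) (r2v y) = (y *m (x *m B)^T) 0 0.
  have := lin1P (f := gx x) _ y.
  have -> : lin1_mx (gx x) = (x *m B)^T by apply/matrixP => i j; rewrite hB !mxE.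
  move=> ->; first by rewrite mxE.
  move=> a u v; apply/rowP => j; by rewrite !mxE linearP /= H2.
apply: (core (B := B)).
  move=> x Hx; rewrite -mem_r2v; apply: HR => y.
  by rewrite -[y]v2rK key Hx trmx0 mulmx0 mxE.
apply/matrixP => i j.
have := HS i j; rewrite key => Hij.
rewrite [RHS]mxE -Hij.
rewrite (_ : (row j S *m _) 0 0 = ((row j S *m (row i S *m B)^T)^T) 0 0); last by rewrite [RHS]mxE.
rewrite trmx_mul trmxK -row_mul.
rewrite !mxE.
apply: eq_bigr => k _; by rewrite !mxE.
Qed.
End T.

Import VectorInternalTheory.

Theorem mainTheorem2 (R : realType) (V : vectType R) (br : V -> V -> V)
    (Z : {vspace V}) :
  two_step_nilpotent br -> is_center br Z -> non_singular br Z ->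
  (\dim (fullv : {vspace V}) > 3 * \dim Z)%N ->
  forall w : V -> V -> R^o, two_form w -> closed_form br w ->
  forall z u, z \in Z -> w z u = 0.
Proof.
move=> [[[Hb1 Hb2] Hba _] [Hnil _]] Hcen Hns Hdim w [[Hw1 Hw2] Hwa] Hcl z W Hz.
have brDl x y t : br (x + y) t = br x t + br y t.
  by have := Hb1 1 x y t; rewrite !scale1r.
have brDr x y t : br t (x + y) = br t x + br t y.
  by have := Hb2 1 x y t; rewrite !scale1r.
have brN x y : br x y = - br y x.
  have := Hba (x + y); rewrite brDl !brDr !Hba add0r addr0 => /eqP.
  by rewrite addr_eq0 => /eqP.
have w0 v : w 0 v = 0.
  have h := Hw1 1 0 0 v; rewrite !scale1r addr0 in h.
  have h' : w 0 v + 0 = w 0 v + w 0 v by rewrite addr0 {1}h.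
  by move/addrI: h' => <-.
have brZ x y : br x y \in Z by apply/Hcen => t; apply: Hnil.
apply/eqP/negPn/negP => Hwz.
pose A := lin1_mx (fun x : 'rV[R]_(dim V) => v2r (br W (r2v x))).
have hA x : x *m A = v2r (br W (r2v x)).
  by apply: lin1P => a p q; rewrite linearP /= Hb2 linearP.
pose C := kermx A.
have hC i : br W (r2v (row i C)) = 0.
  apply: v2r_inj; rewrite -hA linear0.
  by rewrite -row_mul mulmx_ker row0.
have hAZ : (\rank A <= \dim Z)%N.
  apply: mxrankS; apply/row_subP => i.
  by rewrite rowE hA -mem_r2v v2rK.
move: Hdim; rewrite dimvf => Hdim.
have hrk := rank_leq_row A.
have hkC := mxrank_ker A.
suff H : (2 * \rank C <= dim V + \dim Z)%N.
  rewrite /C hkC in H.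
  move: H hrk hAZ Hdim; clear; move: (dim V) (\rank A) (\dim Z) => a b c; lia.
apply: (transport (b := fun x y => w (br x y) W)).
- by move=> a x y t /=; rewrite Hb1 Hw1.
- by move=> a x y t /=; rewrite Hb2 Hw1.
- move=> x Hx; case: (boolP (x \in Z)) => // hx.
  have [y hy] := Hns x hx z Hz.
  by have := Hx y; rewrite hy => /eqP; rewrite (negbTE Hwz).
- move=> i j /=.
  have := Hcl (r2v (row i C)) (r2v (row j C)) W.
  by rewrite (brN (r2v (row j C)) W) !hC oppr0 !w0 !addr0.
Qed.
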